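(* Let $N=\{1,\dots,n\}$ be agents and $A$ a finite item set with additive valuations with externalities $V_i(j,a)\in\mathbb{R}$. Every complete allocation satisfying PROP-Ave satisfies GFS.
   Context: A complete allocation $\pi$ partitions $A$ into bundles $\pi_1,\dots,\pi_n$; $\pi(a)$ is the agent receiving $a$; $V_i(j,a)$ is agent $i$'s value when item $a$ goes to agent $j$; $V_i(\pi)=\sum_{a\in A}V_i(\pi(a),a)$. $\pi$ satisfies PROP-Ave if $V_i(\pi)\ge\frac1n\sum_{a\in A}\sum_{j\in N}V_i(j,a)$ for all $i$. Let $V_i^{max}(a)=\max_{j\in N}V_i(j,a)$, $V_i^{min}(a)=\min_{j\in N}V_i(j,a)$, $\mathrm{GFS}_i=\frac1n\sum_{a\in A}(V_i^{max}(a)-V_i^{min}(a))$; $\pi$ satisfies GFS if $V_i(\pi)\ge\mathrm{GFS}_i+\sum_{a\in A}V_i^{min}(a)$ for all $i\in N$. *)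

(* Defs.v *)
(* Agents N = 'I_n, items A : finType, valuations
   V i j a = V_i(j,a) : value to agent i when item a goes to agent j. *)
From HB Require Import structures.
From mathcomp Require Import all_boot all_order all_algebra.
Set Implicit Arguments. Unset Strict Implicit. Unset Printing Implicit Defensive.
Import Order.TTheory GRing.Theory Num.Theory.
Local Open Scope ring_scope.

Section Defs.
Variables (R : realFieldType) (n : nat) (A : finType).
Variable V : 'I_n -> 'I_n -> A -> R.

(* A complete allocation: every item is assigned to exactly one agent,
   i.e. a function pi : A -> 'I_n (pi a = the agent receiving a). *)
Definition value (i : 'I_n) (pi : A -> 'I_n) : R :=
  \sum_(a : A) V i (pi a) a.

Definition PROP_Ave (pi : A -> 'I_n) : Prop :=
  forall i : 'I_n,
    value i pi >= n%:R^-1 * \sum_(a : A) \sum_(j < n) V i j a.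

(* max / min over j in N; the seed V i i a is itself one of the values,
   so these are the true max / min over the nonempty set N. *)
Definition Vmax (i : 'I_n) (a : A) : R :=
  \big[Num.max/V i i a]_(j < n) V i j a.
Definition Vmin (i : 'I_n) (a : A) : R :=
  \big[Num.min/V i i a]_(j < n) V i j a.

Definition GFS_share (i : 'I_n) : R :=
  n%:R^-1 * \sum_(a : A) (Vmax i a - Vmin i a).

Definition GFS (pi : A -> 'I_n) : Prop :=
  forall i : 'I_n,
    value i pi >= GFS_share i + \sum_(a : A) Vmin i a.
End Defs.

(* Main.v *)
Require Import Defs.
From HB Require Import structures.
From mathcomp Require Import all_boot all_order all_algebra.
Import Order.TTheory GRing.Theory Num.Theory.
Local Open Scope ring_scope.

Lemma bmin_le (R : realFieldType) (I : eqType) (x0 : R) (r : seq I) (F : I -> R) :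
  forall k, k \in r -> \big[Num.min/x0]_(j <- r) F j <= F k.
Proof.
elim: r => [|x r IH] k //; rewrite inE big_cons ge_min => /orP [/eqP ->|kr].
  by rewrite lexx.
by rewrite IH // orbT.
Qed.

Theorem proposition4 (R : realFieldType) (n : nat) (A : finType)
    (V : 'I_n -> 'I_n -> A -> R) (pi : A -> 'I_n) :
  PROP_Ave V pi -> GFS V pi.
Proof.
move=> H i; apply: le_trans (H i).
have n0 : (n%:R : R) != 0 by rewrite pnatr_eq0 -lt0n (leq_ltn_trans _ (ltn_ord i)).
have key : forall a, Vmax V i a - Vmin V i a <=
    \sum_(j < n) V i j a - n%:R * Vmin V i a.
  move=> a; set m := Vmin V i a.
  have mle : forall k, m <= V i k a.
    by move=> k; rewrite /m /Vmin bmin_le // mem_index_enum.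
  have step : forall k, V i k a - m <= \sum_(j < n) (V i j a - m).
    move=> k; rewrite (bigD1 k) //= lerDl; apply: sumr_ge0 => j _.
    by rewrite subr_ge0.
  have -> : \sum_(j < n) V i j a - n%:R * m = \sum_(j < n) (V i j a - m).
    by rewrite sumrB sumr_const card_ord mulr_natl.
  rewrite lerBlDr /Vmax; apply: (big_ind (fun y => y <= _)).
  - by rewrite -lerBlDr step.
  - by move=> x y hx hy; rewrite ge_max hx hy.
  - by move=> j _; rewrite -lerBlDr step.
rewrite /GFS_share.
have h2 : \sum_(a : A) (Vmax V i a - Vmin V i a) <=
   \sum_(a : A) (\sum_(j < n) V i j a - n%:R * Vmin V i a).
  by apply: ler_sum => a _; apply: key.
have e : \sum_(a : A) (\sum_(j < n) V i j a - n%:R * Vmin V i a) =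
   \sum_(a : A) \sum_(j < n) V i j a - n%:R * \sum_(a : A) Vmin V i a.
  by rewrite sumrB mulr_sumr.
rewrite e in h2.
have ninv : 0 <= (n%:R : R)^-1 by rewrite invr_ge0 ler0n.
apply: le_trans (lerD (ler_wpM2l ninv h2) (lexx _)) _.
by rewrite mulrBr mulKf // subrK.
Qed.
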